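(* Let $(\alpha_1,\alpha_2)\in\mathbb{C}^2$ and $p_1,p_2\in\mathbb{C}[u]\setminus\{0\}$. (i) $\mathcal{A}_{\alpha_1,\alpha_2}(p_1,p_2)\simeq\mathcal{A}_{\alpha_2,\alpha_1}(p_2,p_1)$. (ii) If $\psi(u)=\gamma u+\gamma_0$ with $\gamma\in\mathbb{C}\setminus\{0\}$ and $\gamma_0\in\mathbb{C}$, then $\mathcal{A}_{\alpha_1,\alpha_2}(p_1\circ\psi,p_2\circ\psi)\simeq\mathcal{A}_{\gamma\alpha_1,\gamma\alpha_2}(p_1,p_2)$.
   Context: $\tilde{\mathcal{A}}_{\alpha_1,\alpha_2}(p_1,p_2)$ is the $\mathbb{C}$-algebra generated by $H,X_1^\pm,X_2^\pm$ with relations ($i=1,2$) $HX_i^\pm-X_i^\pm H=\pm\alpha_iX_i^\pm$, $X_i^+X_i^-=p_i(H-\alpha_i/2)$, $X_i^-X_i^+=p_i(H+\alpha_i/2)$, $X_1^+X_2^-=X_2^-X_1^+$, $X_1^-X_2^+=X_2^+X_1^-$; the noncommutative Kleinian fiber product $\mathcal{A}_{\alpha_1,\alpha_2}(p_1,p_2)$ is its quotient by the ideal of all $a$ with $f(H)a=0$ for some nonzero polynomial $f$. *)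

(* Defs.v *)
From HB Require Import structures.
From mathcomp Require Import all_boot all_order all_algebra.
From mathcomp Require Import complex.
Set Implicit Arguments. Unset Strict Implicit. Unset Printing Implicit Defensive.
Import Order.TTheory GRing.Theory Num.Theory.
Local Open Scope ring_scope.

Section KFP.
Variable R : rcfType.
Local Notation C := (complex R).

(* The defining relations of  \tilde A_{a1,a2}(p1,p2)  on elements
   h, x1p = X_1^+, x1m = X_1^-, x2p = X_2^+, x2m = X_2^- of a C-algebra A. *)
Definition kfp_rels (a1 a2 : C) (p1 p2 : {poly C}) (A : algType C)
    (h x1p x1m x2p x2m : A) : Prop :=
  (h * x1p - x1p * h = a1 *: x1p) /\
  (h * x1m - x1m * h = - (a1 *: x1m)) /\
  (h * x2p - x2p * h = a2 *: x2p) /\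
  (h * x2m - x2m * h = - (a2 *: x2m)) /\
  (x1p * x1m = horner_alg (h - (a1 / 2%:R)%:A) p1) /\
  (x1m * x1p = horner_alg (h + (a1 / 2%:R)%:A) p1) /\
  (x2p * x2m = horner_alg (h - (a2 / 2%:R)%:A) p2) /\
  (x2m * x2p = horner_alg (h + (a2 / 2%:R)%:A) p2) /\
  (x1p * x2m = x2m * x1p) /\
  (x1m * x2p = x2p * x1m).

(* (At; h, x1p, x1m, x2p, x2m) is a presentation of \tilde A_{a1,a2}(p1,p2):
   the generators satisfy the relations and the universal property of the
   algebra given by generators and relations holds. *)
Definition kfp_tilde_presentation (a1 a2 : C) (p1 p2 : {poly C})
    (At : algType C) (h x1p x1m x2p x2m : At) : Prop :=
  kfp_rels a1 a2 p1 p2 h x1p x1m x2p x2m /\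
  forall (B : algType C) (hb y1p y1m y2p y2m : B),
    kfp_rels a1 a2 p1 p2 hb y1p y1m y2p y2m ->
    (exists f : {lrmorphism At -> B},
        [/\ f h = hb, f x1p = y1p, f x1m = y1m, f x2p = y2p & f x2m = y2m]) /\
    (forall f g : {lrmorphism At -> B},
        [/\ f h = hb, f x1p = y1p, f x1m = y1m, f x2p = y2p & f x2m = y2m] ->
        [/\ g h = hb, g x1p = y1p, g x1m = y1m, g x2p = y2p & g x2m = y2m] ->
        f =1 g).

(* A is (a model of) the noncommutative Kleinian fiber product
   A_{a1,a2}(p1,p2): the quotient of \tilde A_{a1,a2}(p1,p2) by the ideal
   of all a such that f(H) a = 0 for some nonzero polynomial f, i.e. the
   codomain of a surjective algebra morphism from \tilde A whose kernel is
   exactly that ideal. *)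
Definition is_kleinian_fiber_product (a1 a2 : C) (p1 p2 : {poly C})
    (A : algType C) : Prop :=
  exists (At : algType C) (h x1p x1m x2p x2m : At),
    kfp_tilde_presentation a1 a2 p1 p2 h x1p x1m x2p x2m /\
    exists pi : {lrmorphism At -> A},
      (forall b : A, exists a : At, pi a = b) /\
      (forall a : At, pi a = 0 <->
         exists f : {poly C}, f != 0 /\ horner_alg h f * a = 0).

Definition alg_isomorphic (A B : algType C) : Prop :=
  exists f : {lrmorphism A -> B}, bijective f.

End KFP.

(* Main.v *)
Require Import Defs.
From HB Require Import structures.
From mathcomp Require Import all_boot all_order all_algebra.
From mathcomp Require Import complex.
From mathcomp Require Import reals.
Import Order.TTheory GRing.Theory Num.Theory.
Local Open Scope ring_scope.
Set Implicit Arguments. Unset Strict Implicit. Unset Printing Implicit Defensive.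

Section Transfer.
Variable (K : fieldType) (At Bt A B : algType K).
Variables (phi : {lrmorphism At -> Bt}) (piA : {lrmorphism At -> A}) (piB : {lrmorphism Bt -> B}).
Hypothesis piA_surj : forall b, exists a, piA a = b.
Hypothesis kerAB : forall a, piA a = 0 -> piB (phi a) = 0.

Lemma surjb (b : A) : exists a, piA a == b.
Proof. by have [a <-] := piA_surj b; exists a. Qed.
Definition trsec (b : A) : At := xchoose (surjb b).
Lemma trsecK b : piA (trsec b) = b.
Proof. exact/eqP/(xchooseP (surjb b)). Qed.
Definition trmap (b : A) : B := piB (phi (trsec b)).
Lemma trmapE a : trmap (piA a) = piB (phi a).
Proof.
rewrite /trmap; apply/eqP; rewrite -subr_eq0 -!rmorphB; apply/eqP/kerAB.
by rewrite rmorphB /= trsecK subrr.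
Qed.

Lemma trmap_zmod : GRing.zmod_morphism trmap.
Proof.
move=> x y; have [a <-] := piA_surj x; have [b <-] := piA_surj y.
by rewrite -rmorphB !trmapE !rmorphB.
Qed.
Lemma trmap_monoid : GRing.monoid_morphism trmap.
Proof.
split; first by rewrite -(rmorph1 piA) trmapE !rmorph1.
move=> x y; have [a <-] := piA_surj x; have [b <-] := piA_surj y.
by rewrite -rmorphM !trmapE !rmorphM.
Qed.
Lemma trmap_scalable : scalable trmap.
Proof.
move=> c x; have [a <-] := piA_surj x.
by rewrite -linearZ !trmapE !linearZ.
Qed.

HB.instance Definition _ := GRing.isZmodMorphism.Build A B trmap trmap_zmod.
HB.instance Definition _ := GRing.isMonoidMorphism.Build A B trmap trmap_monoid.
HB.instance Definition _ := GRing.isScalable.Build K A B *:%R trmap trmap_scalable.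

Lemma transfer_ex : exists f : {lrmorphism A -> B}, forall a, f (piA a) = piB (phi a).
Proof. by exists trmap; exact: trmapE. Qed.
End Transfer.

Lemma horner_alg_morph (K : fieldType) (A B : algType K) (f : {lrmorphism A -> B}) x p :
  f (horner_alg x p) = horner_alg (f x) p.
Proof.
elim/poly_ind: p => [|p c IH]; first by rewrite !rmorph0.
by rewrite !rmorphD !rmorphM /= IH !horner_algX !horner_algC linearZ /= rmorph1.
Qed.

Lemma horner_alg_comp (K : fieldType) (A : algType K) (x : A) p q :
  horner_alg x (p \Po q) = horner_alg (horner_alg x q) p.
Proof.
elim/poly_ind: p => [|p c IH]; first by rewrite comp_poly0 !rmorph0.
by rewrite comp_polyD comp_polyM comp_polyX comp_polyC !rmorphD !rmorphM /= IH !horner_algC horner_algX.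
Qed.

Definition sel (T : Type) (sw : bool) (x y : T) := if sw then y else x.

Section Main.
Variable R : rcfType.
Local Notation C := (complex R).

Lemma iso_of_maps (A B : algType C) (At Bt : algType C)
  (phi : {lrmorphism At -> Bt}) (psi : {lrmorphism Bt -> At})
  (piA : {lrmorphism At -> A}) (piB : {lrmorphism Bt -> B}) :
  (forall b, exists a, piA a = b) -> (forall b, exists a, piB a = b) ->
  (forall a, piA a = 0 <-> piB (phi a) = 0) ->
  (forall a, psi (phi a) = a) -> (forall b, phi (psi b) = b) ->
  alg_isomorphic A B.
Proof.
move=> sA sB ker pp qq.
have kAB a : piA a = 0 -> piB (phi a) = 0 by move/ker.
have kBA b : piB b = 0 -> piA (psi b) = 0 by move=> hb; apply/ker; rewrite qq.
have [f Hf] := @transfer_ex _ _ _ _ _ phi piA piB sA kAB.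
have [g Hg] := @transfer_ex _ _ _ _ _ psi piB piA sB kBA.
exists f; exists g.
- by move=> x; have [a <-] := sA x; rewrite Hf Hg pp.
- by move=> y; have [b <-] := sB y; rewrite Hg Hf qq.
Qed.

Lemma kfp_iso_general (a1 a2 b1 b2 : C) (p1 p2 q1 q2 q q' : {poly C}) (sw : bool)
  (A B : algType C) :
  size q = 2 -> size q' = 2 -> q \Po q' = 'X -> q' \Po q = 'X ->
  (forall (X : algType C) (h x1p x1m x2p x2m : X),
     kfp_rels a1 a2 p1 p2 h x1p x1m x2p x2m ->
     kfp_rels b1 b2 q1 q2 (horner_alg h q') (sel sw x1p x2p) (sel sw x1m x2m)
       (sel sw x2p x1p) (sel sw x2m x1m)) ->
  (forall (X : algType C) (h x1p x1m x2p x2m : X),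
     kfp_rels b1 b2 q1 q2 h x1p x1m x2p x2m ->
     kfp_rels a1 a2 p1 p2 (horner_alg h q) (sel sw x1p x2p) (sel sw x1m x2m)
       (sel sw x2p x1p) (sel sw x2m x1m)) ->
  is_kleinian_fiber_product a1 a2 p1 p2 A ->
  is_kleinian_fiber_product b1 b2 q1 q2 B ->
  alg_isomorphic A B.
Proof.
move=> sq sq' qq' q'q HAB HBA.
move=> [At [hA [x1p [x1m [x2p [x2m [[relA univA] [piA [surjA kerA]]]]]]]]].
move=> [Bt [hB [y1p [y1m [y2p [y2m [[relB univB] [piB [surjB kerB]]]]]]]]].
have [[phi [ph0 ph1 ph2 ph3 ph4]] _] := univA _ _ _ _ _ _ (HBA _ _ _ _ _ _ relB).
have [[psi [ps0 ps1 ps2 ps3 ps4]] _] := univB _ _ _ _ _ _ (HAB _ _ _ _ _ _ relA).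
have pp : forall a, psi (phi a) = a.
{ have := (univA _ _ _ _ _ _ relA).2 (psi \o phi) idfun.
  move=> H a; apply: (H _ _ a) => //; split => //=.
    by rewrite ph0 horner_alg_morph ps0 -horner_alg_comp qq' horner_algX.
  all: move: ph1 ph2 ph3 ph4 ps1 ps2 ps3 ps4; case: sw {HAB HBA} => /= ph1 ph2 ph3 ph4 ps1 ps2 ps3 ps4.
  all: by rewrite ?ph1 ?ph2 ?ph3 ?ph4 ?ps1 ?ps2 ?ps3 ?ps4. }
have qq : forall b, phi (psi b) = b.
{ have := (univB _ _ _ _ _ _ relB).2 (phi \o psi) idfun.
  move=> H a; apply: (H _ _ a) => //; split => //=.
    by rewrite ps0 horner_alg_morph ph0 -horner_alg_comp q'q horner_algX.
  all: move: ph1 ph2 ph3 ph4 ps1 ps2 ps3 ps4; case: sw {HAB HBA pp} => /= ph1 ph2 ph3 ph4 ps1 ps2 ps3 ps4.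
  all: by rewrite ?ps1 ?ps2 ?ps3 ?ps4 ?ph1 ?ph2 ?ph3 ?ph4. }
apply: (iso_of_maps surjA surjB _ pp qq) => a; rewrite kerA kerB; split.
- move=> [f [f0 hf]]; exists (f \Po q); split; first by rewrite comp_poly_eq0 ?sq.
  by rewrite horner_alg_comp -ph0 -horner_alg_morph -rmorphM hf rmorph0.
- move=> [f [f0 hf]]; exists (f \Po q'); split; first by rewrite comp_poly_eq0 ?sq'.
  by rewrite horner_alg_comp -ps0 -horner_alg_morph -[a]pp -rmorphM hf rmorph0.
Qed.
End Main.

Section Rels.
Variable R : rcfType.
Local Notation C := (complex R).

Lemma rels_swap a1 a2 p1 p2 (X : algType C) (h x1p x1m x2p x2m : X) :
  kfp_rels a1 a2 p1 p2 h x1p x1m x2p x2m ->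
  kfp_rels a2 a1 p2 p1 (horner_alg h 'X) x2p x2m x1p x1m.
Proof.
rewrite horner_algX.
by move=> [e1 [e2 [e3 [e4 [e5 [e6 [e7 [e8 [e9 e10]]]]]]]]]; do 9! split => //.
Qed.

Lemma horner_aff (X : algType C) (z : X) c d :
  horner_alg z (c *: 'X + d%:P) = c *: z + d%:A.
Proof. by rewrite -mul_polyC rmorphD rmorphM /= !horner_algC horner_algX mulr_algl. Qed.

Lemma rels_affine c d a1 a2 p1 p2 (X : algType C) (h x1p x1m x2p x2m : X) :
  kfp_rels a1 a2 (p1 \Po (c *: 'X + d%:P)) (p2 \Po (c *: 'X + d%:P)) h x1p x1m x2p x2m ->
  kfp_rels (c * a1) (c * a2) p1 p2 (horner_alg h (c *: 'X + d%:P)) x1p x1m x2p x2m.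
Proof.
move=> [e1 [e2 [e3 [e4 [e5 [e6 [e7 [e8 [e9 e10]]]]]]]]].
rewrite !horner_alg_comp in e5 e6 e7 e8.
set Y := horner_alg h _.
have comm x : Y * x - x * Y = c *: (h * x - x * h).
  rewrite /Y horner_aff mulrDl mulrDr -scalerAl -scalerAr mulr_algl mulr_algr.
  by rewrite scalerBr opprD addrA addrAC addrK.
have hm k : horner_alg (h - k%:A) (c *: 'X + d%:P) = Y - (c * k)%:A.
  by rewrite /Y !horner_aff scalerBr scalerA addrAC.
have hp k : horner_alg (h + k%:A) (c *: 'X + d%:P) = Y + (c * k)%:A.
  by rewrite /Y !horner_aff scalerDr scalerA addrAC.
rewrite /kfp_rels -/Y !comm e1 e2 e3 e4 e5 e6 e7 e8 !hm !hp !scalerN !scalerA !mulrA.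
by do 9! split.
Qed.
End Rels.

Lemma size_aff (K : fieldType) (c d : K) : c != 0 -> size (c *: 'X + d%:P) = 2.
Proof.
move=> c0; rewrite -mul_polyC size_MXaddC polyC_eq0 (negbTE c0) /=.
by rewrite size_polyC c0.
Qed.

Lemma aff_comp (K : fieldType) (c d c' d' : K) :
  c' * c = 1 -> c' * d + d' = 0 ->
  (c' *: 'X + d'%:P) \Po (c *: 'X + d%:P) = 'X.
Proof.
move=> h1 h2.
rewrite comp_polyD comp_polyC comp_polyZ comp_polyX scalerDr scalerA h1 scale1r.
by rewrite scale_polyC -addrA -polyCD h2 addr0.
Qed.

Theorem mainTheorem14 (R : realType) (a1 a2 : R[i]) (p1 p2 : {poly R[i]}) :
  p1 != 0 -> p2 != 0 ->
  (forall A B : algType R[i],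
     is_kleinian_fiber_product a1 a2 p1 p2 A ->
     is_kleinian_fiber_product a2 a1 p2 p1 B ->
     alg_isomorphic A B) /\
  (forall (gamma gamma0 : R[i]), gamma != 0 ->
   let psi := gamma *: 'X + gamma0%:P in
   forall A B : algType R[i],
     is_kleinian_fiber_product a1 a2 (p1 \Po psi) (p2 \Po psi) A ->
     is_kleinian_fiber_product (gamma * a1) (gamma * a2) p1 p2 B ->
     alg_isomorphic A B).
Proof.
move=> _ _; split.
- move=> A B hA hB.
  apply: (@kfp_iso_general _ a1 a2 a2 a1 p1 p2 p2 p1 'X 'X true A B _ _ _ _ _ _ hA hB).
  + exact: size_polyX.
  + exact: size_polyX.
  + exact: comp_polyX.
  + exact: comp_polyX.
  + by move=> X h x1p x1m x2p x2m H; exact: rels_swap.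
  + by move=> X h x1p x1m x2p x2m H; exact: rels_swap.
- move=> g g0 gn0 psi A B hA hB.
  have gi0 : g^-1 != 0 by rewrite invr_eq0.
  pose q := g^-1 *: 'X + (- (g^-1 * g0))%:P.
  have qpsi : q \Po psi = 'X by apply: aff_comp; rewrite ?mulVf // addrN.
  have psiq : psi \Po q = 'X.
    by apply: aff_comp; rewrite ?mulfV // mulrN mulrA mulfV // mul1r addNr.
  apply: (@kfp_iso_general _ a1 a2 (g * a1) (g * a2) (p1 \Po psi) (p2 \Po psi) p1 p2
            q psi false A B _ _ _ _ _ _ hA hB).
  + exact: size_aff.
  + exact: size_aff.
  + exact: qpsi.
  + exact: psiq.
  + by move=> X h x1p x1m x2p x2m H; exact: rels_affine.
  + move=> X h x1p x1m x2p x2m H.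
    have := @rels_affine _ g^-1 (- (g^-1 * g0)) (g * a1) (g * a2) (p1 \Po psi) (p2 \Po psi)
      X h x1p x1m x2p x2m.
    rewrite -!comp_polyA psiq !comp_polyXr !mulrA !mulVf // !mul1r.
    by apply.
Qed.
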